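(* Let $G$ be a graph on $n$ nodes with $m$ edges, let $k\in\{1,\dots,n-1\}$, and let $T$ be a threshold graph on $n$ nodes with $m$ edges such that $\sum_{i=1}^k\lambda_i(T)\ge\sum_{i=1}^k\lambda_i(G)$. Then the complement graphs $\bar G$ and $\bar T$ satisfy $\sum_{i=1}^{n-k-1}\lambda_i(\bar T)\ge\sum_{i=1}^{n-k-1}\lambda_i(\bar G)$. Moreover, every threshold graph $T$ on $n$ nodes with $m$ edges satisfies $\sum_{i=1}^{n-1}\lambda_i(\bar T)=\sum_{i=1}^{n-1}\lambda_i(\bar G)$.
   Context: All graphs are finite and simple; $\bar H$ denotes the complement of a graph $H$. For a graph $G$ on $n$ nodes, the Laplacian eigenvalues (eigenvalues of $L(G)=D(G)-A(G)$) are $\lambda_1(G)\ge\dots\ge\lambda_n(G)=0$. A threshold graph is a graph obtainable from the empty graph by repeatedly adding a new node that is either isolated or adjacent to all previously added nodes. *)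

(* Defs.v *)
From HB Require Import structures.
From mathcomp Require Import all_boot all_order all_algebra all_fingroup.
From mathcomp Require Import reals.
From Stdlib Require Import ClassicalEpsilon.
Set Implicit Arguments. Unset Strict Implicit. Unset Printing Implicit Defensive.
Import Order.TTheory GRing.Theory Num.Theory.
Local Open Scope ring_scope.

Definition simple_graph n (e : rel 'I_n) : Prop :=
  (forall i j, e i j = e j i) /\ (forall i, e i i = false).

Definition nedges n (e : rel 'I_n) : nat :=
  #|[set p : 'I_n * 'I_n | (p.1 < p.2)%N && e p.1 p.2]|.

Definition compl_graph n (e : rel 'I_n) : rel 'I_n :=
  fun i j => (i != j) && ~~ e i j.

(* threshold graph: there is an order of insertion of the vertices
   (p 0, p 1, ..., p (n-1)) and for each step j a bit b j saying whether the
   new vertex p j is joined to all previously added vertices (true) or is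
   isolated from them (false). *)
Definition threshold n (e : rel 'I_n) : Prop :=
  exists (p : 'S_n) (b : 'I_n -> bool),
    forall i j : 'I_n, (i < j)%N -> e (p i) (p j) = b j.

Definition laplacian (R : realType) n (e : rel 'I_n) : 'M[R]_n :=
  \matrix_(i, j) (if i == j then (#|[set k | e i k]|)%:R else - (e i j)%:R).

(* The Laplacian eigenvalues listed with multiplicity in nonincreasing order:
   the (unique) sequence s of length n, sorted nonincreasingly, with
   char_poly L = prod_(x <- s) (X - x). *)
Definition lap_spectrum_spec (R : realType) n (e : rel 'I_n) (s : seq R) : Prop :=
  [/\ size s = n, sorted (fun x y : R => y <= x) s &
      char_poly (laplacian R e) = \prod_(x <- s) ('X - x%:P)].

Definition lap_eigs (R : realType) n (e : rel 'I_n) : seq R :=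
  epsilon (inhabits [::]) (lap_spectrum_spec e).

Definition lambda (R : realType) n (e : rel 'I_n) (i : nat) : R :=
  nth 0 (lap_eigs R e) i.-1.

Definition lap_ksum (R : realType) n (e : rel 'I_n) (k : nat) : R :=
  \sum_(1 <= i < k.+1) lambda R e i.

(* Main.v *)
Require Import Defs.
From HB Require Import structures.
From mathcomp Require Import all_boot all_order all_algebra all_fingroup.
From mathcomp Require Import reals.
From mathcomp Require Import ring.
From mathcomp.real_closed Require Import complex.
From Stdlib Require Import ClassicalEpsilon.
Import Order.TTheory GRing.Theory Num.Theory.
Local Open Scope ring_scope.
Set Implicit Arguments. Unset Strict Implicit. Unset Printing Implicit Defensive.


Lemma detJ (K : comNzRingType) m (C : 'M[K]_m.+1) (a : K) :
  (forall i, \sum_j C i j = a) -> a * \det (C + const_mx 1) = (a + m.+1%:R) * \det C.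
Proof.
move=> rs.
pose D : 'M[K]_m.+1 := \matrix_(i, j) if j == ord0 then 1 else C i j.
pose U : 'M[K]_m.+1 := \matrix_(i, j) ((j == ord0) || (i == j))%:R.
pose W : 'M[K]_m.+1 := \matrix_(i, j) if i == j then (if j == ord0 then a else 1) else 0.
pose V : 'M[K]_m.+1 := \matrix_(i, j) if i == ord0 then (if j == ord0 then a + m.+1%:R else 1)
                                        else (i == j)%:R.
have dU : \det U = 1.
  rewrite det_trig; last first.
    apply/is_trig_mxP => i j lij; rewrite mxE.
    have -> : (j == ord0) = false by apply/negbTE; case: j lij => [[|j] ?].
    by rewrite /= -val_eqE /= (ltn_eqF lij).
  by rewrite big1 // => i _; rewrite mxE eqxx orbT.
have dW : \det W = a.
  rewrite det_trig; last first.
    by apply/is_trig_mxP => i j lij; rewrite mxE -val_eqE /= (ltn_eqF lij).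
  rewrite big_ord_recl mxE eqxx /= big1 ?mulr1 // => i _.
  by rewrite mxE eqxx.
have dV : \det V = a + m.+1%:R.
  rewrite -det_tr det_trig; last first.
    apply/is_trig_mxP => i j lij; rewrite !mxE.
    have -> : (j == ord0) = false by apply/negbTE; case: j lij => [[|j] ?].
    by rewrite /= -val_eqE /= (gtn_eqF lij).
  rewrite big_ord_recl !mxE eqxx /= big1 ?mulr1 // => i _.
  by rewrite !mxE eqxx.
have h1 : C *m U = D *m W.
  apply/matrixP => i j; rewrite !mxE.
  rewrite [RHS](bigD1 j) //= [X in _ + X]big1 => [|k kj]; last first.
    by rewrite !mxE (negbTE kj) mulr0.
  rewrite !mxE eqxx addr0.
  case: (eqVneq j ord0) => [-> | jn0].
    rewrite mul1r -(rs i); apply: eq_bigr => k _; by rewrite !mxE eqxx /= mulr1.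
  rewrite mulr1 (bigD1 j) //= !mxE (negbTE jn0) eqxx mulr1 big1 ?addr0 // => k kj.
  by rewrite !mxE (negbTE jn0) (negbTE kj) mulr0.
have h2 : (C + const_mx 1) *m U = D *m V.
  apply/matrixP => i j; rewrite !mxE [RHS](bigD1 ord0) //= !mxE eqxx /=.
  case: (eqVneq j ord0) => [-> | jn0].
    rewrite mul1r [X in _ = _ + X]big1 ?addr0; last by move=> k kn0; rewrite !mxE (negbTE kn0) mulr0.
    rewrite (eq_bigr (fun k => C i k + 1)); last by move=> k _; rewrite !mxE eqxx mulr1.
    by rewrite big_split /= rs sumr_const card_ord.
  rewrite mul1r (bigD1 j) //= [X in _ = _ + X](bigD1 j) /=; last by rewrite jn0.
  rewrite !mxE (negbTE jn0) eqxx /= !mulr1 big1 ?addr0; last first.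
    by move=> k kj; rewrite !mxE (negbTE jn0) /= (negbTE kj) mulr0.
  rewrite big1 ?addr0; first exact: addrC.
  by move=> k /andP[kn0 kj]; rewrite !mxE (negbTE kn0) (negbTE kj) mulr0.
have e1 : \det C = \det D * a by rewrite -dW -det_mulmx -h1 det_mulmx dU mulr1.
have e2 : \det (C + const_mx 1) = \det D * (a + m.+1%:R)
  by rewrite -dV -det_mulmx -h2 det_mulmx dU mulr1.
rewrite e1 e2; ring.
Qed.


Lemma quad_ge0 (C : numClosedFieldType) n (e : rel 'I_n) (M : 'M[C]_n) (v : 'rV[C]_n) :
  (forall i j, e i j = e j i) ->
  (forall i j, M i j = (i == j)%:R * (\sum_k ((e i k)%:R : C)) - (e i j)%:R) ->
  0 <= \sum_j (v *m M) 0 j * (v 0 j)^*.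
Proof.
move=> sym hM.
set w := fun i => v 0 i.
pose f i j := ((e i j)%:R : C) * (w i * (w i)^* - w i * (w j)^*).
have E1 : \sum_j (v *m M) 0 j * (v 0 j)^* = \sum_i \sum_j f i j.
  rewrite (eq_bigr (fun j => \sum_i w i * M i j * (w j)^*)); last first.
    by move=> j _; rewrite mxE mulr_suml.
  rewrite exchange_big /=; apply: eq_bigr => i _.
  rewrite (eq_bigr (fun j => (i == j)%:R * (\sum_k ((e i k)%:R : C)) * (w i * (w j)^*)
                               - (e i j)%:R * (w i * (w j)^*))); last first.
    by move=> j _; rewrite hM; ring.
  rewrite sumrB (bigD1 i) //= eqxx mul1r.
  set d := \sum_k _.
  have -> : \sum_(j < n | j != i) (i == j)%:R * d * (w i * (w j)^*) = 0.
    by apply: big1 => j ji; rewrite eq_sym (negbTE ji) !mul0r.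
  rewrite addr0.
  rewrite /f [RHS](eq_bigr (fun j => (e i j)%:R * (w i * (w i)^*) - (e i j)%:R * (w i * (w j)^*))); last first.
    by move=> j _; ring.
  by rewrite sumrB mulr_suml.
have E2 : \sum_i \sum_j ((e i j)%:R * ((w i - w j) * (w i - w j)^*)) = 2 * \sum_i \sum_j f i j.
  rewrite (eq_bigr (fun i => \sum_j (f i j + f j i))); last first.
    move=> i _; apply: eq_bigr => j _; rewrite /f sym rmorphB /=; ring.
  rewrite (eq_bigr (fun i => \sum_j f i j + \sum_j f j i)); last by move=> i _; rewrite big_split.
  rewrite big_split /= [X in _ + X]exchange_big /=; ring.
have H0 : 0 <= \sum_i \sum_j ((e i j)%:R * ((w i - w j) * (w i - w j)^*)).
  apply: sumr_ge0 => i _; apply: sumr_ge0 => j _.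
  by apply: mulr_ge0; [apply: ler0n | apply: mul_conjC_ge0].
rewrite E1.
have : 0 <= 2 * \sum_i \sum_j f i j by rewrite -E2.
by rewrite pmulr_rge0 // ltr0n.
Qed.

Lemma eig_ge0 (C : numClosedFieldType) n (e : rel 'I_n) (M : 'M[C]_n) (z : C) :
  (forall i j, e i j = e j i) ->
  (forall i j, M i j = (i == j)%:R * (\sum_k ((e i k)%:R : C)) - (e i j)%:R) ->
  root (char_poly M) z -> 0 <= z.
Proof.
move=> sym hM; rewrite -eigenvalue_root_char => /eigenvalueP [v vM vn0].
have Q := quad_ge0 v sym hM.
have E : \sum_j (v *m M) 0 j * (v 0 j)^* = z * \sum_j v 0 j * (v 0 j)^*.
  rewrite vM mulr_sumr; apply: eq_bigr => j _; by rewrite mxE mulrA.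
rewrite E in Q.
have [j vj] : exists j, v 0 j != 0.
  apply/existsP; apply: contraR vn0 => /existsPn h.
  by apply/eqP/matrixP => i k; rewrite ord1 mxE; apply/eqP; rewrite -[_ == _]negbK h.
have Sp : 0 < \sum_j v 0 j * (v 0 j)^*.
  rewrite (bigD1 j) //=; apply: ltr_wpDr; last by rewrite mul_conjC_gt0.
  by apply: sumr_ge0 => k _; apply: mul_conjC_ge0.
by rewrite pmulr_lge0 in Q.
Qed.


Lemma deg_sum (R : nzRingType) n (e : rel 'I_n) i :
  (#|[set k | e i k]|)%:R = \sum_k ((e i k)%:R : R).
Proof.
rewrite cardsE -sum1_card natr_sum big_mkcond /=.
by apply: eq_bigr => k _; rewrite unfold_in; case: (e i k).
Qed.

Lemma lap_entry (R : realType) n (e : rel 'I_n) i j : simple_graph e ->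
  laplacian R e i j = (i == j)%:R * (\sum_k ((e i k)%:R : R)) - (e i j)%:R.
Proof.
move=> [_ irr]; rewrite mxE -deg_sum.
case: (eqVneq i j) => [<-|ij]; first by rewrite irr mul1r subr0.
by rewrite mul0r sub0r.
Qed.

Lemma lapC_entry (R : realType) n (e : rel 'I_n) : simple_graph e ->
  forall i j, (map_mx (real_complex R) (laplacian R e)) i j =
    (i == j)%:R * (\sum_k ((e i k)%:R : R[i])) - (e i j)%:R.
Proof.
move=> sg i j; rewrite mxE lap_entry // rmorphB rmorphM /= !rmorph_nat rmorph_sum /=.
by congr (_ * _ - _); apply: eq_bigr => k _; rewrite rmorph_nat.
Qed.

Lemma lap_root_ge0 (R : realType) n (e : rel 'I_n) (x : R) : simple_graph e ->
  root (char_poly (laplacian R e)) x -> 0 <= x.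
Proof.
move=> sg rx.
have : root (char_poly (map_mx (real_complex R) (laplacian R e))) (x%:C)%C.
  by rewrite -map_char_poly fmorph_root.
move/(eig_ge0 (proj1 sg) (lapC_entry R sg)).
by rewrite ler0c.
Qed.

Lemma spec_exists (R : realType) n (e : rel 'I_n) : simple_graph e ->
  exists s : seq R, lap_spectrum_spec e s.
Proof.
move=> sg; set L := laplacian R e.
set f := real_complex R.
have [r hr] := closed_field_poly_normal (char_poly (map_mx f L)).
rewrite (monicP (char_poly_monic _)) scale1r in hr.
have rr : forall z : R[i], z \in r -> ((complex.Re z)%:C%C : R[i]) = z.
  move=> z zr; apply: (@RRe_real R); apply: ger0_real.
  apply: (eig_ge0 (proj1 sg) (lapC_entry R sg)).
  by rewrite -/L hr root_prod_XsubC.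
pose s0 := map (@complex.Re R) r.
have hp : char_poly L = \prod_(x <- s0) ('X - x%:P).
  apply: (@map_poly_inj _ _ f).
  rewrite map_char_poly hr map_prod_XsubC big_map.
  by apply: eq_big_seq => z zr; rewrite -{1}(rr z zr).
have tot : total (fun x y : R => y <= x) by move=> x y; exact: le_total.
exists (sort (fun x y : R => y <= x) s0); split.
- by rewrite size_sort; have := size_char_poly L; rewrite hp size_prod_XsubC => -[].
- exact: sort_sorted.
- by rewrite hp; apply: perm_big; rewrite perm_sym perm_sort.
Qed.

Lemma eigs_spec (R : realType) n (e : rel 'I_n) : simple_graph e ->
  lap_spectrum_spec e (lap_eigs R e).
Proof.
move=> sg; rewrite /lap_eigs; apply: epsilon_spec; exact: spec_exists.
Qed.

Lemma eigs_ge0 (R : realType) n (e : rel 'I_n) : simple_graph e ->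
  all (fun x => 0 <= x) (lap_eigs R e).
Proof.
move=> sg; have [_ _ hp] := eigs_spec R sg.
apply/allP => x xs; apply: (lap_root_ge0 sg).
by rewrite hp root_prod_XsubC.
Qed.


Lemma compl_simple n (e : rel 'I_n) : simple_graph e -> simple_graph (compl_graph e).
Proof.
move=> [sym irr]; split => [i j|i]; rewrite /compl_graph; last by rewrite eqxx.
by rewrite eq_sym sym.
Qed.

Lemma lapc_entry (R : realType) n (e : rel 'I_n) : simple_graph e -> forall i j,
  laplacian R (compl_graph e) i j = (i == j)%:R * n%:R - 1 - laplacian R e i j.
Proof.
move=> sg i j; have sgc := compl_simple sg.
have [sym irr] := sg.
rewrite !lap_entry //.
have -> : \sum_k (((compl_graph e) i k)%:R : R) = n%:R - 1 - \sum_k ((e i k)%:R : R).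
  rewrite (eq_bigr (fun k => 1 - ((i == k)%:R : R) - (e i k)%:R)); last first.
    move=> k _; rewrite /compl_graph; case: (eqVneq i k) => [<-|ik]; first by rewrite irr /=; ring.
    by case: (e i k) => /=; ring.
  rewrite !sumrB sumr_const card_ord (bigD1 i) //= eqxx big1 ?addr0 //.
  by move=> k ki; rewrite eq_sym (negbTE ki).
rewrite /compl_graph; case: (eqVneq i j) => [<-|ij]; first by rewrite irr /=; ring.
by case: (e i j) => /=; ring.
Qed.

Lemma rowsum_lap (R : realType) n (e : rel 'I_n) : simple_graph e -> forall i,
  \sum_j laplacian R e i j = 0.
Proof.
move=> sg i; have [sym irr] := sg.
rewrite (eq_bigr (fun j => (i == j)%:R * (\sum_k ((e i k)%:R : R)) - (e i j)%:R)); last first.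
  by move=> j _; rewrite lap_entry.
set d := \sum_k ((e i k)%:R : R).
rewrite sumrB (bigD1 i) //= eqxx mul1r.
have -> : \sum_(j < n | j != i) (i == j)%:R * d = 0.
  by apply: big1 => k ki; rewrite eq_sym (negbTE ki) mul0r.
by rewrite addr0 subrr.
Qed.

Lemma compl_charpoly (R : realType) m (e : rel 'I_m.+1) : simple_graph e ->
  ('X - (m.+1%:R)%:P) * char_poly (laplacian R (compl_graph e)) =
  'X * \det (('X - (m.+1%:R)%:P)%:M + map_mx polyC (laplacian R e)).
Proof.
move=> sg.
set C := (_ %:M + _).
have hC : char_poly_mx (laplacian R (compl_graph e)) = C + const_mx 1.
  have HL : laplacian R (compl_graph e) =
     \matrix_(i, j) ((i == j)%:R * m.+1%:R - 1 - laplacian R e i j).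
    by apply/matrixP=> i j; rewrite [RHS]mxE lapc_entry.
  rewrite HL; apply/matrixP => i j; rewrite !mxE !rmorphB /=.
  rewrite polyCM polyC1; case: (i == j) => /=; rewrite ?mulr1n ?mulr0n ?mul1r ?mul0r ?polyC0 ?polyC1; ring.
have rs : forall i, \sum_j C i j = 'X - (m.+1%:R)%:P.
  move=> i; rewrite (eq_bigr (fun j => ('X - (m.+1%:R)%:P) *+ (i == j) + (laplacian R e i j)%:P)); last first.
    by move=> j _; rewrite !mxE.
  rewrite big_split /= -rmorph_sum rowsum_lap // addr0.
  rewrite (bigD1 i) //= eqxx mulr1n big1 ?addr0 //.
  by move=> k ki; rewrite eq_sym (negbTE ki) mulr0n.
rewrite /char_poly hC detJ //.
by rewrite rmorph_nat subrK.
Qed.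

Lemma prodN_seq (R : comNzRingType) (s : seq R) (F : R -> {poly R}) :
  \prod_(x <- s) - F x = (-1) ^+ size s * \prod_(x <- s) F x.
Proof.
elim: s => [|x s IH]; first by rewrite !big_nil mulr1.
by rewrite !big_cons IH /= exprS; ring.
Qed.

Lemma detC_prod (R : fieldType) n (L : 'M[R]_n) (s : seq R) (c : R) :
  char_poly L = \prod_(x <- s) ('X - x%:P) -> size s = n ->
  \det (('X - c%:P)%:M + map_mx polyC L) = \prod_(x <- s) ('X - (c - x)%:P).
Proof.
move=> hp hs.
set q : {poly R} := c%:P - 'X.
have hm : map_mx (comp_poly q) (char_poly_mx L) = (-1) *: (('X - c%:P)%:M + map_mx polyC L).
  apply/matrixP => i j; rewrite !mxE /q.
  case: (i == j) => /=; rewrite ?mulr1n ?mulr0n comp_polyB ?comp_polyX ?comp_polyC ?comp_poly0 ; ring.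
have := det_map_mx (comp_poly q) (char_poly_mx L).
rewrite hm detZ -/(char_poly L) hp rmorph_prod /=.
move=> h.
have h2 : \det (('X - c%:P)%:M + map_mx polyC L) = (-1) ^+ n * \prod_(x <- s) (q - x%:P).
  rewrite -[LHS](signrMK n) h; congr (_ * _); apply: eq_bigr => x _.
  by rewrite comp_polyB comp_polyX comp_polyC.
rewrite h2 -hs -prodN_seq; apply: eq_bigr => x _.
by rewrite /q rmorphB /=; ring.
Qed.


Lemma seq_compl (R : realFieldType) (c : R) (s t : seq R) : 0 < c ->
  sorted (fun x y => y <= x) s -> sorted (fun x y => y <= x) t ->
  all (fun x => 0 <= x) s -> all (fun x => 0 <= x) t ->
  perm_eq (c :: t) (0 :: map (fun x => c - x) s) ->
  exists s', s = rcons s' 0 /\ t = rcons (rev (map (fun x => c - x) s')) 0.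
Proof.
move=> c0 ss st s0 t0 pe.
have c_ne0 : c != 0 by rewrite gt_eqF.
have z_in : 0 \in s.
  have : c \in 0 :: map (fun x => c - x) s by rewrite -(perm_mem pe) mem_head.
  rewrite in_cons (negbTE c_ne0) /= => /mapP [x xs] /eqP.
  by rewrite eq_sym subr_eq addrC -subr_eq subrr eq_sym => /eqP <-.
move: ss s0 z_in pe; case/lastP: s => [|s' x] ss s0 z_in pe; first by rewrite in_nil in z_in.
have tr : transitive (fun x y : R => x <= y) by move=> a b d; apply: le_trans.
have xle : all (fun y => x <= y) s'.
  move: ss; rewrite -rev_sorted rev_rcons /= => /(order_path_min tr).
  by rewrite all_rev.
have x0 : x = 0.
  apply/le_anti/andP; split; last by move/allP: s0; apply; rewrite mem_rcons mem_head.
  move: z_in; rewrite mem_rcons in_cons => /orP [/eqP <- //|].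
  by move/allP: xle; apply.
subst x; exists s'; split => //.
set l := map (fun x => c - x) s'.
have pt : perm_eq t (0 :: l).
  rewrite -(perm_cons c); apply: (perm_trans pe).
  rewrite map_rcons subr0; apply: (@perm_trans _ (0 :: c :: l)); first by rewrite perm_cons; apply/permPl; exact: perm_rcons.
  apply/permPl; exact: (perm_catCA [:: 0] [:: c] l).
have pw : perm_eq t (rcons (rev l) 0).
  by apply: (perm_trans pt); rewrite perm_sym perm_rcons perm_cons perm_rev.
have tr' : transitive (fun x y : R => y <= x) by move=> a b d h1 h2; apply: le_trans h2 h1.
have an : antisymmetric (fun x y : R => y <= x).
  by move=> a b /andP [h1 h2]; apply/le_anti/andP; split.
apply: (sorted_eq tr' an st _ pw).
  rewrite -rev_sorted rev_rcons revK /=.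
  have sl : sorted (fun x y : R => x <= y) l.
    rewrite sorted_map; apply: (sub_sorted _ (subseq_sorted _ (subseq_rcons s' 0) ss)).
      by move=> a b /=; rewrite lerD2l lerN2.
    by move=> a b d h1 h2; apply: le_trans h2 h1.
  rewrite path_min_sorted //; apply/allP => y yl.
  by move/allP: t0; apply; rewrite (perm_mem pt) in_cons yl orbT.
Qed.


Lemma sum_nth_take (R : realType) (l : seq R) k :
  \sum_(0 <= i < k) nth 0 l i = \sum_(x <- take k l) x.
Proof.
elim: l k => [|x l IH] k.
  by rewrite big1 ?big_nil // => i _; rewrite nth_nil.
case: k => [|k]; first by rewrite big_geq // take0 big_nil.
by rewrite big_nat_recl //= big_cons -IH.
Qed.

Lemma ksum_take (R : realType) n (e : rel 'I_n) k :
  lap_ksum R e k = \sum_(x <- take k (lap_eigs R e)) x.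
Proof.
by rewrite /lap_ksum big_add1 /= -sum_nth_take; apply: eq_bigr.
Qed.

Lemma sum_csub (R : realType) (c : R) (r : seq R) :
  \sum_(x <- r) (c - x) = c *+ size r - \sum_(x <- r) x.
Proof.
elim: r => [|x r IH]; first by rewrite !big_nil subr0.
by rewrite !big_cons IH /= mulrS; ring.
Qed.

Lemma compl_ksum (R : realType) m (e : rel 'I_m.+1) k : simple_graph e -> (k <= m)%N ->
  lap_ksum R (compl_graph e) (m - k) =
  (m - k)%:R * m.+1%:R - \sum_(x <- lap_eigs R e) x + lap_ksum R e k.
Proof.
move=> sg km.
have sgc := compl_simple sg.

have [ss sos hps] := eigs_spec R sg.
have [st sot hpt] := eigs_spec R sgc.
have id := compl_charpoly R sg.
rewrite (detC_prod _ hps ss) hpt in id.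
have pe : perm_eq (m.+1%:R :: lap_eigs R (compl_graph e)) (0 :: map (fun x => m.+1%:R - x) (lap_eigs R e)).
  apply: prod_XsubC_eq; rewrite !big_cons big_map polyC0 subr0; exact: id.
have [s' [es' et]] := seq_compl (ltr0Sn _ _) sos sot (eigs_ge0 R sg) (eigs_ge0 R sgc) pe.
have sz : size s' = m by move: ss; rewrite es' size_rcons => -[].
rewrite !ksum_take et es' -!cats1 takel_cat ?size_rev ?size_map ?sz ?leq_subr //.
rewrite takel_cat ?sz // take_rev size_map sz subKn // big_rev -map_drop big_map.
rewrite sum_csub size_drop sz big_cat big_seq1 /= addr0.
rewrite -{2}(cat_take_drop k s') big_cat /=.
rewrite -mulr_natr; ring.
Qed.

Lemma sum_eigs (R : realType) m (e : rel 'I_m.+1) : simple_graph e ->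
  \sum_(x <- lap_eigs R e) x = \tr (laplacian R e).
Proof.
move=> sg; have [ss _ hp] := eigs_spec R sg.
have h1 := char_poly_trace (laplacian R e) (ltn0Sn m).
have nz : size (lap_eigs R e) != 0%N by rewrite ss.
have h2 := coefPn_prod_XsubC nz.
rewrite ss /= in h2; rewrite hp h2 in h1.
exact: oppr_inj.
Qed.

Lemma edge_sum n (e : rel 'I_n) : simple_graph e ->
  (\sum_i \sum_j (e i j : nat) = 2 * nedges e)%N.
Proof.
move=> [sym irr].
have ne : nedges e = (\sum_(i : 'I_n) \sum_(j : 'I_n) ((i < j)%N && e i j : nat))%N.
  rewrite /nedges cardsE -sum1_card pair_big /= big_mkcond /=.
  by apply: eq_bigr => p _; rewrite unfold_in /=; case: (_ && _).
have sp : forall i j : 'I_n, (e i j : nat) = (((i < j)%N && e i j) + ((j < i)%N && e j i))%N.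
  move=> i j; rewrite (sym j i); case: (ltngtP i j) => [_|_|/val_inj ->] /=; rewrite ?addn0 //.
  by rewrite irr.
rewrite (eq_bigr (fun i : 'I_n => \sum_(j : 'I_n) (((i < j)%N && e i j) + ((j < i)%N && e j i))%N)); last first.
  by move=> i _; apply: eq_bigr => j _; rewrite sp.
rewrite (eq_bigr (fun i : 'I_n => \sum_(j : 'I_n) ((i < j)%N && e i j : nat) + \sum_(j : 'I_n) ((j < i)%N && e j i : nat))%N); last first.
  by move=> i _; rewrite big_split.
by rewrite big_split /= [X in (_ + X)%N]exchange_big /= -ne addnn mul2n.
Qed.

Lemma tr_lap (R : realType) n (e : rel 'I_n) : simple_graph e ->
  \tr (laplacian R e) = (2 * nedges e)%:R.
Proof.
move=> sg; rewrite -edge_sum // natr_sum /mxtrace.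
apply: eq_bigr => i _; rewrite lap_entry // eqxx mul1r (proj2 sg) subr0 natr_sum.
by apply: eq_bigr => j _.
Qed.

Unset Implicit Arguments.

Theorem lemma4 (R : realType) (n : nat) (G : rel 'I_n) :
  simple_graph G ->
  (forall (T : rel 'I_n) (k : nat),
      simple_graph T -> threshold T -> nedges T = nedges G ->
      (1 <= k <= n.-1)%N ->
      lap_ksum R G k <= lap_ksum R T k ->
      lap_ksum R (compl_graph G) (n - k - 1) <= lap_ksum R (compl_graph T) (n - k - 1))
  /\
  (forall T : rel 'I_n,
      simple_graph T -> threshold T -> nedges T = nedges G ->
      lap_ksum R (compl_graph T) n.-1 = lap_ksum R (compl_graph G) n.-1).
Proof.
case: n G => [|m] G sgG.
  split; first by move=> T k _ _ _ /andP [h1 h2]; move: (leq_trans h1 h2).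
  by move=> T _ _ _; rewrite /lap_ksum !big_geq.
have hsum : forall T : rel 'I_m.+1, simple_graph T -> nedges T = nedges G ->
    \sum_(x <- lap_eigs R T) x = \sum_(x <- lap_eigs R G) x.
  by move=> T sgT ne; rewrite !sum_eigs // !tr_lap // ne.
split.
- move=> T k sgT _ ne /andP [k1 km] hk.
  have -> : (m.+1 - k - 1 = m - k)%N by rewrite subn1 subSKn.
  rewrite !compl_ksum // hsum //.
  by rewrite lerD2l.
- move=> T sgT _ ne /=.
  have h1 := @compl_ksum R m T 0%N sgT (leq0n m).
  have h2 := @compl_ksum R m G 0%N sgG (leq0n m).
  rewrite subn0 in h1 h2.
  by rewrite h1 h2 hsum // /lap_ksum !big_geq.
Qed.
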